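(* Let $G=(V,E)$ be a finite, simple, connected graph which is effective Bonnet Myers sharp with curvature $K$, i.e. $K=\min_{u\sim v}\kappa(u,v)>0$ and $\operatorname{diam}_{\operatorname{eff}}(G)=\frac{\max_v\operatorname{Deg}(v)}{K}$. Let $x\sim y$. Then every $x'\in V_x^y$ has exactly one neighbor in $V_y^x$, and exactly $K-2$ neighbors of $x'$ lie in $V^{xy}$.
   Context: $d$ is the combinatorial distance, $\operatorname{Deg}$ the degree, $\operatorname{diam}_{\operatorname{eff}}(G)=\frac{1}{|V|^2}\sum_{x,y}d(x,y)$. Laplacian $\Delta f(x)=\sum_{y\sim x}(f(y)-f(x))$. Ollivier curvature of an edge: $\kappa(x,y)=\inf\{\Delta f(x)-\Delta f(y): f(y)-f(x)=1,\ \max_{u\sim v}|f(u)-f(v)|=1\}$. For adjacent $x\sim y$: $V_x^y=\{v: d(v,x)<d(v,y)\}$, $V_y^x=\{v:d(v,y)<d(v,x)\}$, $V^{xy}=\{v:d(v,x)=d(v,y)\}$. *)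

(* Defs.v *)
From HB Require Import structures.
From mathcomp Require Import all_boot all_order all_algebra.
From mathcomp Require Import boolp classical_sets reals.
Set Implicit Arguments. Unset Strict Implicit. Unset Printing Implicit Defensive.
Import Order.TTheory GRing.Theory Num.Theory.
Local Open Scope ring_scope.
Local Open Scope classical_set_scope.

Definition simple_graph (T : finType) (adj : rel T) : Prop :=
  symmetric adj /\ irreflexive adj.

Definition connected_graph (T : finType) (adj : rel T) : Prop :=
  forall x y : T, connect adj x y.

Fixpoint reach (T : finType) (adj : rel T) (k : nat) (x : T) : {set T} :=
  match k with
  | 0 => [set x]
  | k'.+1 => reach adj k' x :|: [set v | [exists u in reach adj k' x, adj u v]]
  end.

(* combinatorial distance: least k with y within k steps of x
   (for connected graphs it is < #|T|) *)
Definition dist (T : finType) (adj : rel T) (x y : T) : nat :=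
  find (fun k => y \in reach adj k x) (iota 0 #|T|).

Definition deg (T : finType) (adj : rel T) (x : T) : nat :=
  #|[set v | adj x v]|.

Definition max_deg (T : finType) (adj : rel T) : nat :=
  \max_(v : T) deg adj v.

Definition diam_eff (R : realType) (T : finType) (adj : rel T) : R :=
  (\sum_(x : T) \sum_(y : T) (dist adj x y)%:R) / (#|T| ^ 2)%:R.

Definition laplacian (R : realType) (T : finType) (adj : rel T)
  (f : T -> R) (x : T) : R :=
  \sum_(v : T | adj x v) (f v - f x).

Definition lip_one (R : realType) (T : finType) (adj : rel T) (f : T -> R) : Prop :=
  (forall u v, adj u v -> `|f u - f v| <= 1) /\
  (exists u v, adj u v /\ `|f u - f v| = 1).

(* Ollivier curvature (Laplacian / Lipschitz formulation) *)
Definition ollivier (R : realType) (T : finType) (adj : rel T) (x y : T) : R :=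
  inf [set (laplacian adj f x - laplacian adj f y) |
        f in [set f : T -> R | f y - f x = 1 /\ lip_one adj f]].

(* Main.v *)
Require Import Defs.
From HB Require Import structures.
From mathcomp Require Import all_boot all_order all_algebra.
From mathcomp Require Import boolp classical_sets reals.
From mathcomp Require Import zify ring lra.
Import Order.TTheory GRing.Theory Num.Theory.
Set Implicit Arguments. Unset Strict Implicit.

Lemma reach_mono (T : finType) (adj : rel T) k x y :
  y \in reach adj k x -> y \in reach adj k.+1 x.
Proof. by move=> H /=; rewrite inE H. Qed.

Lemma reach_monoW (T : finType) (adj : rel T) k m x y :
  (k <= m)%N -> y \in reach adj k x -> y \in reach adj m x.
Proof.
move=> /subnK <-; elim: (m - k)%N => [|i IH] H; first by [].
by rewrite addSn; apply: reach_mono; apply: IH.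
Qed.

Lemma reach_step (T : finType) (adj : rel T) k x u v :
  u \in reach adj k x -> adj u v -> v \in reach adj k.+1 x.
Proof.
move=> Hu Huv /=; rewrite !inE; apply/orP; right.
by apply/existsP; exists u; rewrite Hu.
Qed.

Lemma reach_inv (T : finType) (adj : rel T) k x v :
  v \in reach adj k.+1 x ->
  v \in reach adj k x \/ exists u, u \in reach adj k x /\ adj u v.
Proof.
rewrite /= !inE => /orP[H|]; first by left.
by move=> /existsP[u /andP[Hu Huv]]; right; exists u.
Qed.

Lemma reach_pre (T : finType) (adj : rel T) k y u x :
  adj y u -> x \in reach adj k u -> x \in reach adj k.+1 y.
Proof.
move=> Hyu; elim: k x => [|k IH] x.
  rewrite /= inE => /eqP ->; apply: (@reach_step _ _ 0 y y u) => //.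
  by rewrite /= inE.
move/reach_inv=> [H|[w [Hw Hwx]]]; first by apply: reach_mono; apply: IH.
by apply: reach_step (IH _ Hw) Hwx.
Qed.

Lemma reach_sym (T : finType) (adj : rel T) k x y :
  symmetric adj -> y \in reach adj k x -> x \in reach adj k y.
Proof.
move=> Hs; elim: k y => [|k IH] y.
  by rewrite /= !inE => /eqP ->.
move/reach_inv=> [H|[u [Hu Huy]]]; first by apply: reach_mono; apply: IH.
by apply: (@reach_pre _ _ k y u x); [rewrite Hs | apply: IH].
Qed.

Lemma reach_path (T : finType) (adj : rel T) x p :
  path adj x p -> last x p \in reach adj (size p) x.
Proof.
elim: p x => [|a p IH] x /=; first by rewrite inE.
move=> /andP[Hxa Hp]; have := IH a Hp.
case: (size p) => [|k] H.
  by rewrite /= inE in H; rewrite (eqP H); apply: (@reach_step _ _ 0 x x a) => //; rewrite /= inE.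
by apply: reach_pre Hxa H.
Qed.

Lemma reach_exists (T : finType) (adj : rel T) x y :
  connect adj x y -> exists2 k, (k < #|T|)%N & y \in reach adj k x.
Proof.
move/connectP=> [p Hp ->]; case: (shortenP Hp) => p' Hp' Hu _.
exists (size p'); last by apply: reach_path.
have := card_uniqP Hu; move=> Hc.
have : (#|x :: p'| <= #|T|)%N by apply: max_card.
by rewrite Hc /=.
Qed.

Lemma dist_reach (T : finType) (adj : rel T) x y :
  connected_graph adj -> y \in reach adj (dist adj x y) x.
Proof.
move=> Hc; have [k Hk Hr] := @reach_exists _ adj x y (Hc x y).
have Hh : has (fun k => y \in reach adj k x) (iota 0 #|T|).
  by apply/hasP; exists k => //; rewrite mem_iota.
have := nth_find 0%N Hh; rewrite /dist.
have Hf := Hh; rewrite has_find size_iota in Hf.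
by rewrite nth_iota ?add0n.
Qed.

Lemma dist_min (T : finType) (adj : rel T) x y k :
  (k < dist adj x y)%N -> y \notin reach adj k x.
Proof.
move=> Hk; have Hs : (dist adj x y <= #|T|)%N.
  by rewrite /dist; have := find_size (fun k => y \in reach adj k x) (iota 0 #|T|); rewrite size_iota.
have := before_find 0%N Hk; rewrite nth_iota ?add0n //.
  by move=> ->.
by apply: (leq_trans Hk Hs).
Qed.

Lemma reachE (T : finType) (adj : rel T) x y k :
  connected_graph adj -> (y \in reach adj k x) = (dist adj x y <= k)%N.
Proof.
move=> Hc; case: (leqP (dist adj x y) k) => H.
  by rewrite (reach_monoW H (dist_reach x y Hc)).
by apply/negbTE/dist_min.
Qed.

Lemma dist_sym (T : finType) (adj : rel T) x y :
  simple_graph adj -> connected_graph adj -> dist adj x y = dist adj y x.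
Proof.
move=> [Hs _] Hc; apply/eqP; rewrite eqn_leq.
rewrite -(reachE _ _ (dist adj y x) Hc) -(reachE _ _ (dist adj x y) Hc).
by apply/andP; split; apply: reach_sym => //; apply: dist_reach.
Qed.

Lemma dist0 (T : finType) (adj : rel T) x y :
  connected_graph adj -> (dist adj x y == 0%N) = (y == x).
Proof.
move=> Hc; rewrite -leqn0 -reachE //=; by rewrite inE.
Qed.

Lemma dist_xx (T : finType) (adj : rel T) x :
  connected_graph adj -> dist adj x x = 0%N.
Proof. by move=> Hc; apply/eqP; rewrite dist0. Qed.

Lemma dist_edge2 (T : finType) (adj : rel T) z w w' :
  connected_graph adj -> adj w w' -> (dist adj z w' <= (dist adj z w).+1)%N.
Proof.
move=> Hc Hw; rewrite -reachE //; apply: reach_step Hw.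
exact: dist_reach.
Qed.

Lemma dist_edge1 (T : finType) (adj : rel T) z w w' :
  simple_graph adj -> connected_graph adj -> adj w w' ->
  (dist adj w' z <= (dist adj w z).+1)%N.
Proof.
move=> Hs Hc Hw; rewrite (dist_sym _ _ Hs Hc) (dist_sym w z Hs Hc).
exact: dist_edge2.
Qed.

Lemma dist_pred2 (T : finType) (adj : rel T) z w k :
  simple_graph adj -> connected_graph adj -> dist adj z w = k.+1 ->
  exists u, adj w u /\ dist adj z u = k.
Proof.
move=> Hs Hc Hd.
have : w \in reach adj k.+1 z by rewrite reachE // Hd.
move/reach_inv=> [H|[u [Hu Huw]]].
  by move: H; rewrite reachE // Hd ltnn.
exists u; split; first by rewrite Hs.1.
move: Hu; rewrite reachE // => Hu.
have := dist_edge2 z Hc Huw; rewrite Hd; lia.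
Qed.

Lemma dist_pred1 (T : finType) (adj : rel T) z w k :
  simple_graph adj -> connected_graph adj -> dist adj w z = k.+1 ->
  exists u, adj w u /\ dist adj u z = k.
Proof.
move=> Hs Hc; rewrite dist_sym // => /(dist_pred2 Hs Hc) [u [H1 H2]].
by exists u; rewrite dist_sym.
Qed.

Lemma dist_adj (T : finType) (adj : rel T) x y :
  simple_graph adj -> connected_graph adj -> adj x y -> dist adj x y = 1%N.
Proof.
move=> Hs Hc Hxy; have := dist_edge2 x Hc Hxy; rewrite dist_xx //.
have : dist adj x y != 0%N by rewrite dist0 //; apply/eqP=> E; move: Hxy; rewrite E Hs.2.
lia.
Qed.

Local Open Scope ring_scope.

Lemma sum_ind (R : realType) (T : finType) (adj : rel T) w (P : pred T) :
  \sum_(v | adj w v) ((P v : nat)%:R : R) = (#|[set v | adj w v && P v]|)%:R.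
Proof.
rewrite -natr_sum; congr (_ %:R).
rewrite -sum1_card.
rewrite [RHS](eq_bigl (fun v => adj w v && P v)); last by move=> v; rewrite inE.
rewrite [RHS]big_mkcondr /=.
by apply: eq_bigr => v _; case: (P v).
Qed.

Lemma lapB (R : realType) (T : finType) (adj : rel T) (f g : T -> R) x :
  laplacian adj (fun v => f v - g v) x = laplacian adj f x - laplacian adj g x.
Proof.
rewrite /laplacian -sumrB; apply: eq_bigr => v _; ring.
Qed.

Lemma lapN (R : realType) (T : finType) (adj : rel T) (f : T -> R) x :
  laplacian adj (fun v => - f v) x = - laplacian adj f x.
Proof.
rewrite /laplacian -sumrN; apply: eq_bigr => v _; ring.
Qed.

Lemma lap_bound (R : realType) (T : finType) (adj : rel T) (g : T -> R) x :
  (forall u v, adj u v -> `|g u - g v| <= 1) ->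
  `|laplacian adj g x| <= (#|T|)%:R.
Proof.
move=> Hg; rewrite /laplacian.
apply: le_trans (ler_norm_sum _ _ _) _.
apply: (@le_trans _ _ (\sum_(v : T) (1 : R))).
  rewrite (big_mkcond (fun v => adj x v)) /=.
  apply: ler_sum => v _; case: ifP => H //.
  by rewrite distrC; apply: Hg.
by rewrite sumr_const.
Qed.

Lemma curv_le (R : realType) (T : finType) (adj : rel T) (K : R) x y (f : T -> R) :
  (forall u v, adj u v -> K <= ollivier R adj u v) ->
  adj x y ->
  (forall u v, adj u v -> `|f u - f v| <= 1) -> f y - f x = 1 ->
  K <= laplacian adj f x - laplacian adj f y.
Proof.
move=> HK Hxy Hf Hfxy; apply: le_trans (HK _ _ Hxy) _.
rewrite /ollivier.
have Hlb : has_lbound [set (laplacian adj f0 x - laplacian adj f0 y) |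
        f0 in [set f0 : T -> R | f0 y - f0 x = 1 /\ lip_one adj f0]].
  exists (- ((#|T|)%:R + (#|T|)%:R)) => r [g [_ [Hg _]] <-].
  have H1 := lap_bound x Hg; have H2 := lap_bound y Hg.
  move: H1 H2; rewrite !ler_norml => /andP[H1 H1'] /andP[H2 H2'].
  lra.
apply: (ge_inf Hlb); exists f => //; split => //; split => //.
by exists x, y; split => //; rewrite distrC Hfxy normr1.
Qed.

Lemma lap_sum0 (R : realType) (T : finType) (adj : rel T) (h : T -> R) :
  symmetric adj -> \sum_w laplacian adj h w = 0.
Proof.
move=> Hs; rewrite /laplacian.
under eq_bigr do rewrite sumrB.
rewrite sumrB; apply/eqP; rewrite subr_eq0; apply/eqP.
under eq_bigr do rewrite big_mkcond.
rewrite exchange_big /=; apply: eq_bigr => v _.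
rewrite [RHS]big_mkcond /=; apply: eq_bigr => w _.
by rewrite Hs.
Qed.

Lemma natr_lip (R : realType) (a b : nat) :
  (a <= b.+1)%N -> (b <= a.+1)%N -> `|(a%:R : R) - b%:R| <= 1.
Proof.
move=> H1 H2; rewrite ler_norml.
have H1' : (a%:R : R) <= b%:R + 1 by rewrite natr1 ler_nat.
have H2' : (b%:R : R) <= a%:R + 1 by rewrite natr1 ler_nat.
apply/andP; split; lra.
Qed.

Lemma dist_lip (R : realType) (T : finType) (adj : rel T) z :
  simple_graph adj -> connected_graph adj ->
  forall u v, adj u v -> `|((dist adj u z)%:R : R) - (dist adj v z)%:R| <= 1.
Proof.
move=> Hs Hc u v Huv; apply: natr_lip; apply: dist_edge1 => //.
by rewrite Hs.1.
Qed.

Lemma lap_at_center (R : realType) (T : finType) (adj : rel T) z :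
  simple_graph adj -> connected_graph adj ->
  laplacian adj (fun v => ((dist adj v z)%:R : R)) z = (deg adj z)%:R.
Proof.
move=> Hs Hc; rewrite /laplacian /deg.
rewrite (eq_bigr (fun v => (((fun _ => true) v : nat)%:R : R))).
  rewrite sum_ind; congr (_%:R); apply: eq_card => v; rewrite !inE andbT; first by apply/idP/idP => [H|/set_mem //]; apply: mem_set.
move=> v Hv /=; rewrite dist_xx // dist_sym // dist_adj // subr0. by [].
Qed.

Lemma bm_ineq (R : realType) (T : finType) (adj : rel T) (K : R) :
  simple_graph adj -> connected_graph adj ->
  (forall u v, adj u v -> K <= ollivier R adj u v) ->
  forall k z w, dist adj w z = k ->
  laplacian adj (fun v => ((dist adj v z)%:R : R)) w <= (deg adj z)%:R - K * k%:R.
Proof.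
move=> Hs Hc HK; elim=> [|k IH] z w Hd.
  move/eqP: Hd; rewrite dist_sym // dist0 // => /eqP ->.
  by rewrite lap_at_center // mulr0 subr0.
have [u [Hwu Hu]] := dist_pred1 Hs Hc Hd.
have := IH z u Hu.
have Hcv := @curv_le R T adj K w u (fun v => - ((dist adj v z)%:R : R)) HK Hwu.
have Hlip : forall a b, adj a b ->
   `|- ((dist adj a z)%:R : R) - - (dist adj b z)%:R| <= 1.
  by move=> a b Hab; rewrite -opprD normrN; apply: dist_lip.
have Heq : - ((dist adj u z)%:R : R) - - (dist adj w z)%:R = 1.
  by rewrite Hu Hd -natr1; ring.
have H := Hcv Hlip Heq; rewrite !lapN /= in H.
move=> H2; rewrite -natr1; lra.
Qed.

Lemma bm_eq (R : realType) (T : finType) (adj : rel T) (K : R) (x0 : T) :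
  simple_graph adj -> connected_graph adj ->
  (forall u v, adj u v -> K <= ollivier R adj u v) -> 0 < K ->
  diam_eff R adj = (max_deg adj)%:R / K ->
  (forall z, deg adj z = max_deg adj) /\
  (forall z w, laplacian adj (fun v => ((dist adj v z)%:R : R)) w
               = (deg adj z)%:R - K * (dist adj w z)%:R).
Proof.
move=> Hs Hc HK HKpos Hsharp.
set N : R := (#|T|)%:R.
set Dm : R := (max_deg adj)%:R.
set L := fun z w => laplacian adj (fun v => ((dist adj v z)%:R : R)) w.
set S : R := \sum_(x : T) \sum_(y : T) ((dist adj x y)%:R : R).
have HN : 0 < N by rewrite /N ltr0n; apply/card_gt0P; exists x0.
have HKS : K * S = N * N * Dm.
  move: Hsharp; rewrite /diam_eff -/S natrX -/N => H.
  have HN2 : N ^+ 2 != 0 by rewrite expf_neq0 // gt_eqF.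
  have HK0 : K != 0 by rewrite gt_eqF.
  have : S = Dm / K * N ^+ 2.
    by rewrite -H mulrVK // unitfE.
  move=> ->; rewrite /Dm; field; exact: HK0.
set A := fun z => \sum_(w : T) ((deg adj z)%:R - K * (dist adj w z)%:R - L z w).
set B := fun z => N * (Dm - (deg adj z)%:R).
have HA : forall z, 0 <= A z.
  move=> z; apply: sumr_ge0 => w _; rewrite subr_ge0.
  exact: (bm_ineq Hs Hc HK).
have HB : forall z, 0 <= B z.
  move=> z; apply: mulr_ge0; first exact: ltW.
  by rewrite subr_ge0 ler_nat /max_deg; apply: (@leq_bigmax T (fun v => deg adj v) z).
have HF : forall z, A z + B z = N * Dm - K * \sum_(w : T) ((dist adj w z)%:R : R)
                                 - \sum_(w : T) L z w.
  move=> z; rewrite /A /B !sumrB sumr_const mulr_sumr -/N.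
  have E : #|[pred _ : T | true]| = #|T| by apply: eq_card.
  rewrite -mulr_natl E -/N; ring.
have HL : \sum_(z : T) \sum_(w : T) L z w = 0.
  by rewrite big1 // => z _; rewrite /L; apply: lap_sum0; case: Hs.
have E : #|[pred _ : T | true]| = #|T| by apply: eq_card.
have Hsum : \sum_(z : T) (A z + B z) = 0.
  under eq_bigr do rewrite HF.
  rewrite !sumrB HL -[X in _ - X - _]mulr_sumr exchange_big /= -/S sumr_const E HKS.
  rewrite -mulr_natl -/N; ring.
have H0 := psumr_eq0P (fun z _ => addr_ge0 (HA z) (HB z)) Hsum.
have HAB : forall z, A z = 0 /\ B z = 0.
  move=> z; have := H0 z isT; have := HA z; have := HB z; move=> h1 h2 h3.
  split; apply/eqP; rewrite eq_le; apply/andP; split; lra.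
split.
  move=> z; have [_ /eqP] := HAB z; rewrite /B mulf_eq0 gt_eqF //= subr_eq0.
  by move/eqP => Ez; apply/eqP; rewrite -(eqr_nat R) -Ez.
move=> z w; have [Hz _] := HAB z.
have Hnn : forall w, true -> 0 <= (deg adj z)%:R - K * (dist adj w z)%:R - L z w.
  by move=> w' _; rewrite subr_ge0; exact: (bm_ineq Hs Hc HK).
have Hw := @psumr_eq0P R T (fun _ => true) _ Hnn Hz w isT.
by move/eqP: Hw; rewrite subr_eq0 => /eqP H; rewrite H.
Qed.

Lemma min_id (R : realType) (a b : nat) : (a <= b.+1)%N ->
  ((minn a b)%:R : R) = a%:R - ((b < a)%N : nat)%:R.
Proof.
move=> H; have E : (minn a b + (b < a)%N = a)%N by case: ltnP => /= h; lia.
by rewrite -{2}E natrD addrK.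
Qed.

Lemma max_id (R : realType) (a b : nat) : (a <= b.+1)%N -> (b <= a.+1)%N ->
  ((maxn a b)%:R : R) = b%:R + ((b < a)%N : nat)%:R.
Proof.
move=> H H'; have E : (maxn a b = b + (b < a)%N)%N by case: ltnP => /= h; lia.
by rewrite E natrD.
Qed.

Lemma lap_corr (R : realType) (T : finType) (adj : rel T) (f h c : T -> R) v0 :
  f v0 = h v0 -> (forall v, f v = h v + c v) ->
  laplacian adj f v0 = laplacian adj h v0 + \sum_(v | adj v0 v) c v.
Proof.
move=> H0 H; rewrite /laplacian -big_split /=; apply: eq_bigr => v _.
rewrite H H0; ring.
Qed.

Lemma step_eq (R : realType) (T : finType) (adj : rel T) (K : R) x y :
  simple_graph adj -> connected_graph adj ->
  (forall u v, adj u v -> K <= ollivier R adj u v) ->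
  (forall z w, laplacian adj (fun v => ((dist adj v z)%:R : R)) w
               = (deg adj z)%:R - K * (dist adj w z)%:R) ->
  adj x y ->
  forall u w, adj u w ->
  (dist adj u x < dist adj u y)%N -> (dist adj w x < dist adj w y)%N ->
  dist adj w x = (dist adj u x).+1 ->
  #|[set v | adj w v && (dist adj v y < dist adj v x)%N]| =
  #|[set v | adj u v && (dist adj v y < dist adj v x)%N]|.
Proof.
move=> Hs Hc HK HE Hxy u w Huw Hu Hw Hwu.
have Hyx : adj y x by rewrite Hs.1.
have exy : forall v, (dist adj v y <= (dist adj v x).+1)%N.
  by move=> v; apply: dist_edge2.
have eyx : forall v, (dist adj v x <= (dist adj v y).+1)%N.
  by move=> v; apply: dist_edge2.
have lipx : forall a b, adj a b -> (dist adj b x <= (dist adj a x).+1)%N.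
  by move=> a b Hab; apply: dist_edge1.
have lipy : forall a b, adj a b -> (dist adj b y <= (dist adj a y).+1)%N.
  by move=> a b Hab; apply: dist_edge1.
set bw := #|[set v | adj w v && (dist adj v y < dist adj v x)%N]|.
set bu := #|[set v | adj u v && (dist adj v y < dist adj v x)%N]|.
have Hwy : dist adj w y = (dist adj w x).+1 by have := exy w; lia.
have Huy : dist adj u y = (dist adj u x).+1 by have := exy u; lia.
set Bp := fun v => ((dist adj v y < dist adj v x)%N : nat)%:R : R.
have sumB : forall v0, \sum_(v | adj v0 v) Bp v =
     (#|[set v | adj v0 v && (dist adj v y < dist adj v x)%N]|)%:R.
  by move=> v0; rewrite /Bp sum_ind.
have H1 : (bu <= bw)%N.
  set f := fun v => ((minn (dist adj v x) (dist adj v y))%:R : R).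
  have Hl : forall a b, adj a b -> `|f a - f b| <= 1.
    move=> a b Hab; apply: natr_lip.
      have := lipx _ _ Hab; have := lipy _ _ Hab; have := lipx b a; have := lipy b a.
      rewrite Hs.1 Hab; lia.
    have := lipx _ _ Hab; have := lipy _ _ Hab; lia.
  have Hf : f w - f u = 1.
    rewrite /f; have -> : minn (dist adj w x) (dist adj w y) = dist adj w x by lia.
    have -> : minn (dist adj u x) (dist adj u y) = dist adj u x by lia.
    rewrite Hwu -natr1; ring.
  have := curv_le HK Huw Hl Hf.
  have Hc0 : forall v0, (dist adj v0 x < dist adj v0 y)%N ->
     laplacian adj f v0 = laplacian adj (fun v => ((dist adj v x)%:R : R)) v0
                          + \sum_(v | adj v0 v) (- Bp v).
    move=> v0 Hv0; apply: lap_corr.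
      by rewrite /f; congr (_%:R); lia.
    by move=> v; rewrite /f min_id.
  rewrite (Hc0 u Hu) (Hc0 w Hw) !HE !sumrN !sumB Hwu -natr1.
  by move=> h; rewrite -(ler_nat R); lra.
have H2 : (bw <= bu)%N.
  set f := fun v => ((maxn (dist adj v x) (dist adj v y))%:R : R).
  have Hl : forall a b, adj a b -> `|f a - f b| <= 1.
    move=> a b Hab; apply: natr_lip.
      have := lipx _ _ Hab; have := lipy _ _ Hab; have := lipx b a; have := lipy b a.
      rewrite Hs.1 Hab; lia.
    have := lipx _ _ Hab; have := lipy _ _ Hab; lia.
  have Hf : f w - f u = 1.
    rewrite /f; have -> : maxn (dist adj w x) (dist adj w y) = dist adj w y by lia.
    have -> : maxn (dist adj u x) (dist adj u y) = dist adj u y by lia.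
    rewrite Hwy Huy Hwu -natr1; ring.
  have := curv_le HK Huw Hl Hf.
  have Hc0 : forall v0, (dist adj v0 x < dist adj v0 y)%N ->
     laplacian adj f v0 = laplacian adj (fun v => ((dist adj v y)%:R : R)) v0
                          + \sum_(v | adj v0 v) Bp v.
    move=> v0 Hv0; apply: lap_corr.
      by rewrite /f; congr (_%:R); lia.
    by move=> v; rewrite /f max_id.
  rewrite (Hc0 u Hu) (Hc0 w Hw) !HE !sumB Hwy Huy Hwu -!natr1.
  by move=> h; rewrite -(ler_nat R); lra.
by apply/eqP; rewrite eqn_leq H1 H2.
Qed.

Lemma base_card (T : finType) (adj : rel T) x y :
  simple_graph adj -> connected_graph adj -> adj x y ->
  #|[set v | adj x v && (dist adj v y < dist adj v x)%N]| = 1%N.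
Proof.
move=> Hs Hc Hxy; rewrite -(cards1 y); apply: eq_card => v; rewrite !inE.
apply/idP/idP.
  move=> /andP[Hv]; rewrite (dist_sym v x) // (dist_adj Hs Hc Hv) -[(1)%N]/(0.+1)%N ltnS leqn0.
  by rewrite dist_sym // dist0.
move/eqP=> ->; rewrite Hxy dist_xx // (dist_sym y x) // dist_adj //.
Qed.

Lemma count_eq (R : realType) (T : finType) (adj : rel T) (K : R) x y :
  simple_graph adj -> connected_graph adj ->
  (forall z w, laplacian adj (fun v => ((dist adj v z)%:R : R)) w
               = (deg adj z)%:R - K * (dist adj w z)%:R) ->
  deg adj x = deg adj y ->
  adj x y ->
  forall w, (dist adj w x < dist adj w y)%N ->
  (#|[set v | adj w v && (dist adj v y < dist adj v x)%N]|)%:R *+ 2 +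
  (#|[set v | adj w v && (dist adj v x == dist adj v y)]|)%:R = K.
Proof.
move=> Hs Hc HE Hdeg Hxy w Hw.
have Hyx : adj y x by rewrite Hs.1.
have exy : forall v, (dist adj v y <= (dist adj v x).+1)%N.
  by move=> v; apply: dist_edge2.
have eyx : forall v, (dist adj v x <= (dist adj v y).+1)%N.
  by move=> v; apply: dist_edge2.
have Hwy : dist adj w y = (dist adj w x).+1 by have := exy w; lia.
have H := lapB adj (fun v => ((dist adj v x)%:R : R)) (fun v => ((dist adj v y)%:R : R)) w.
rewrite !HE Hdeg Hwy -natr1 in H.
have -> : K = laplacian adj (fun v => ((dist adj v x)%:R : R) - (dist adj v y)%:R) w.
  rewrite H; ring.
rewrite /laplacian -!sum_ind -sumrMnl -big_split /=.
apply: eq_bigr => v _; rewrite Hwy -natr1.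
have E : ((dist adj v x) + 1 = dist adj v y + (dist adj v y < dist adj v x)%N * 2
          + (dist adj v x == dist adj v y))%N.
  by have := exy v; have := eyx v; case: ltngtP => h; lia.
have E' : ((dist adj v x)%:R : R) + 1 = (dist adj v y)%:R
   + ((dist adj v y < dist adj v x)%N : nat)%:R *+ 2
   + ((dist adj v x == dist adj v y) : nat)%:R.
  by rewrite natr1 -addn1 E !natrD natrM mulr_natr.
lra.
Qed.

Unset Implicit Arguments. Set Strict Implicit.

Theorem lemma3p4 (R : realType) (T : finType) (adj : rel T) (K : R)
  (Hsimple : simple_graph adj) (Hconn : connected_graph adj)
  (HKmin : (forall u v, adj u v -> K <= ollivier R adj u v) /\
           (exists u v, adj u v /\ ollivier R adj u v = K))
  (HKpos : 0 < K)
  (Hsharp : diam_eff R adj = (max_deg adj)%:R / K)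
  (x y : T) (Hxy : adj x y) :
  forall x' : T, (dist adj x' x < dist adj x' y)%N ->
    #|[set v | adj x' v && (dist adj v y < dist adj v x)%N]| = 1%N /\
    (#|[set v | adj x' v && (dist adj v x == dist adj v y)]|)%:R = K - 2.
Proof.
have [Hreg HE] := bm_eq x Hsimple Hconn HKmin.1 HKpos Hsharp.
have Hdeg : deg adj x = deg adj y by rewrite !Hreg.
have exy : forall v, (dist adj v y <= (dist adj v x).+1)%N.
  by move=> v; apply: dist_edge2.
have Hb : forall n x', dist adj x' x = n -> (dist adj x' x < dist adj x' y)%N ->
    #|[set v | adj x' v && (dist adj v y < dist adj v x)%N]| = 1%N.
  elim=> [|n IH] x' Hn Hx'.
    move/eqP: Hn; rewrite dist_sym // dist0 // => /eqP ->.
    exact: base_card.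
  have [u [Hx'u Hu]] := dist_pred1 Hsimple Hconn Hn.
  have Hux : adj u x' by rewrite Hsimple.1.
  have Hu' : (dist adj u x < dist adj u y)%N.
    have := @dist_edge1 _ adj y u x' Hsimple Hconn Hux; lia.
  rewrite (step_eq Hsimple Hconn HKmin.1 HE Hxy Hux Hu' Hx') ?Hu ?Hn //.
  exact: IH.
move=> x' Hx'; have H1 := Hb _ x' erefl Hx'; split => //.
have := count_eq Hsimple Hconn HE Hdeg Hxy Hx'; rewrite H1 => H.
lra.
Qed.
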